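(* Let $q_{n,k}$ be the number of induced subgraphs of the matchable Lucas cube $\Omega_n$ isomorphic to the $k$-dimensional hypercube $Q_k$. Then: (1) for $n\ge2$, $q_{n,0}=L_n$ and $q_{n,1}=nF_{n-1}$; (2) for $n\ge4$, $q_{n,2}=\frac15 nF_{n-3}+\frac1{10}(n-3)nL_{n-2}$; (3) for $n\ge6$, $q_{n,3}=\frac{2}{25}nF_{n-5}+\frac1{25}(n-5)nL_{n-4}+\frac1{30}(n^2-9n+20)nF_{n-3}$.
   Context: For $n\ge1$ let $\Xi_n$ be the poset on $\{x_1,\dots,x_n\}$ whose cover relations are exactly: $x_2\prec x_1$, $x_3\prec x_2$, and for $3\le i\le n-1$, $x_i\prec x_{i+1}$ if $i$ is odd and $x_{i+1}\prec x_i$ if $i$ is even (so $x_1>x_2>x_3<x_4>x_5<\cdots$). A filter of a poset is an up-closed subset. The matchable Lucas cube $\Omega_n$ is the graph whose vertices are the filters of $\Xi_n$, two filters being adjacent iff one is obtained from the other by deleting a single element (the undirected Hasse diagram of the filter lattice); $\Omega_0$ is the one-vertex graph. $L_n$ are the Lucas numbers ($L_0=2$, $L_1=1$, $L_n=L_{n-1}+L_{n-2}$) and $F_n$ the Fibonacci numbers ($F_0=0$, $F_1=1$, $F_n=F_{n-1}+F_{n-2}$). *)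

(* Defs.v *)
From mathcomp Require Import all_boot all_order all_algebra.
Set Implicit Arguments. Unset Strict Implicit. Unset Printing Implicit Defensive.

Fixpoint fib (n : nat) : nat :=
  match n with 0 => 0 | 1 => 1 | (m.+1 as p).+1 => fib p + fib m end.

Fixpoint lucas (n : nat) : nat :=
  match n with 0 => 2 | 1 => 1 | (m.+1 as p).+1 => lucas p + lucas m end.

(* The element i : 'I_n represents x_{i+1}.
   xi_cov n i j  <=>  x_{i+1} ≺ x_{j+1} is a cover relation of Xi_n
   (written with 1-based indices a = i+1, b = j+1). *)
Definition xi_cov (n : nat) (i j : 'I_n) : bool :=
  let a := i.+1 in let b := j.+1 in
  [|| (a == 2) && (b == 1),
      (a == 3) && (b == 2),
      [&& 3 <= a, a <= n - 1, odd a & b == a.+1]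
    | [&& 3 <= b, b <= n - 1, ~~ odd b & a == b.+1] ].

Definition xi_le (n : nat) (i j : 'I_n) : bool := connect (@xi_cov n) i j.

Definition is_filter (n : nat) (F : {set 'I_n}) : bool :=
  [forall i, forall j, (i \in F) && xi_le i j ==> (j \in F)].

Definition filters (n : nat) : {set {set 'I_n}} := [set F | is_filter F].

Definition del1 (T : finType) (A B : {set T}) : bool :=
  [exists x, (x \in A) && (B == A :\ x)].
Definition adj (T : finType) (A B : {set T}) : bool := del1 A B || del1 B A.

(* Vertices of Omega_n are filters of Xi_n, edges given by adj.
   Vertices of the hypercube Q_k are subsets of 'I_k, edges given by adj
   (symmetric difference a singleton). *)

Definition induced_Qk (n k : nat) (S : {set {set 'I_n}}) : bool :=
  (S \subset filters n) &&
  [exists f : {ffun {set 'I_k} -> {set 'I_n}},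
     [&& injectiveb f, [set f u | u : {set 'I_k}] == S &
         [forall u, forall v, adj (f u) (f v) == adj u v]]].

Arguments induced_Qk : clear implicits.

Definition q (n k : nat) : nat := #|[set S | induced_Qk n k S]|.

(* Main.v *)
Require Import Defs.
From mathcomp Require Import all_boot all_order all_algebra zify ring.
Set Implicit Arguments. Unset Strict Implicit. Unset Printing Implicit Defensive.


Section Gen.
Variable T : finType.
Implicit Types A B C X Y : {set T}.

Definition sd A B := (A :\: B) :|: (B :\: A).
Lemma in_sd x A B : (x \in sd A B) = (x \in A) (+) (x \in B).
Proof. by rewrite !inE; case: (x \in A); case: (x \in B). Qed.
Lemma sdA A B C : sd (sd A B) C = sd A (sd B C).
Proof. by apply/setP=> x; rewrite !in_sd addbA. Qed.
Lemma sdKl A B : sd A (sd A B) = B.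
Proof. by apply/setP=> x; rewrite !in_sd addbA addbb. Qed.
Lemma sdKr A B : sd (sd A B) B = A.
Proof. by apply/setP=> x; rewrite !in_sd -addbA addbb addbF. Qed.
Lemma sd0 A : sd A set0 = A.
Proof. by apply/setP=> x; rewrite !in_sd inE addbF. Qed.
Lemma sd_inj A X Y : sd A X = sd A Y -> X = Y.
Proof. by move=> h; rewrite -(sdKl A X) h sdKl. Qed.

Lemma adjE A B : adj A B = (#|sd A B| == 1).
Proof.
apply/idP/idP.
- rewrite /adj /del1; case/orP=> /existsP [x /andP [xA /eqP E]]; apply/cards1P; exists x;
  apply/setP=> y; rewrite E in_sd !inE; case: (eqVneq y x) => [->|]; rewrite ?xA //=.
  by case: (y \in A).
  by case: (y \in B).
- case/cards1P=> x E.
  have Ey y : (y \in A) (+) (y \in B) = (y == x) by rewrite -in_sd E inE.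
  have := Ey x; rewrite eqxx.
  rewrite /adj /del1.
  case xA: (x \in A) => /= xB.
  + apply/orP; left; apply/existsP; exists x; rewrite xA; apply/eqP/setP=> y.
    rewrite !inE; have := Ey y; case: (eqVneq y x) => [->|]; rewrite ?xA ?xB //=.
    by move/negbTE.
    by case: (y \in A); case: (y \in B).
  + apply/orP; right; apply/existsP; exists x; rewrite -(negbK (x \in B)) xB; apply/eqP/setP=> y.
    rewrite !inE; have := Ey y; case: (eqVneq y x) => [->|]; rewrite ?xA //=.
    by case: (y \in A); case: (y \in B).
Qed.

End Gen.
Section Cube.
Variable T : finType.
Lemma cube_struct (k : nat) (f : {set 'I_k} -> {set T}) :
  injective f -> (forall u v, adj u v -> adj (f u) (f v)) ->
  exists c : 'I_k -> T, injective c /\ forall u, f u = sd (f set0) (c @: u).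
Proof.
move=> finj fadj.
have ex1 (u : {set 'I_k}) (i : 'I_k) : i \notin u -> exists x, f (i |: u) = sd (f u) [set x].
  move=> iu; have : adj u (i |: u).
    rewrite adjE; apply/cards1P; exists i; apply/setP=> y; rewrite in_sd !inE.
    by case: (eqVneq y i) => [->|]; rewrite ?(negbTE iu) //=; case: (y \in u).
  move/fadj; rewrite adjE => /cards1P [x E]; exists x; by rewrite -E sdKl.
have ex0 i : exists x, f [set i] == sd (f set0) [set x].
  by have [x hx] := ex1 set0 i (negbT (in_set0 i)); exists x; rewrite -hx setU0.
pose c i := xchoose (ex0 i).
have hc i : f [set i] = sd (f set0) [set c i] by apply/eqP; exact: (xchooseP (ex0 i)).
have step : forall m (u : {set 'I_k}), #|u| <= m -> forall i, i \notin u -> f (i |: u) = sd (f u) [set c i].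
  elim=> [|m IH] u.
    by rewrite leqn0 => /eqP/cards0_eq -> i _; rewrite setU0.
  case: (set_0Vmem u) => [-> _ i _|[j ju]]; first by rewrite setU0.
  move=> hu i iu.
  set u' := u :\ j.
  have hu' : #|u'| <= m by move: hu; rewrite (cardsD1 j u) ju.
  have ij : i != j by apply: contraNneq iu => ->.
  have iu' : i \notin u' by rewrite !inE negb_and iu orbT.
  have ju' : j \notin u' by rewrite !inE eqxx.
  have Hi := IH u' hu' i iu'; have Hj := IH u' hu' j ju'.
  have Eu : u = j |: u' by rewrite setD1K.
  have [x Ex] := ex1 u i iu.
  have ju'i : j \notin i |: u' by rewrite in_setU1 negb_or eq_sym ij.
  have [y Ey] := ex1 _ j ju'i.
  have E2 : j |: (i |: u') = i |: u by rewrite Eu setUCA.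
  rewrite E2 Hi in Ey; rewrite Ex in Ey; rewrite Eu Hj in Ey.
  rewrite !sdA in Ey; move/sd_inj: Ey => Ey.
  have cij : c i != c j.
    apply/eqP=> cE; move: Hi; rewrite cE -Hj => /finj /setP /(_ i).
    by rewrite !in_setU1 eqxx (negbTE ij) (negbTE iu').
  have xcj : x != c j.
    apply/eqP=> xE; move: Ex; rewrite xE Eu Hj sdKr => /finj /setP /(_ i).
    by rewrite in_setU1 eqxx (negbTE iu').
  move/setP: Ey => Ey; have e1 := Ey (c j); have e2 := Ey (c i).
  rewrite !in_sd !inE eqxx eq_sym (negbTE xcj) in e1.
  rewrite !in_sd !inE eqxx (negbTE cij) in e2.
  move: e1; rewrite eq_sym (negbTE cij) /= => /esym/eqP cjy.
  move: e2; rewrite -cjy (negbTE cij) /= => /eqP cix.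
  by rewrite Ex cix.
have cinj : injective c.
  move=> i j cE; apply: set1_inj; apply: finj; by rewrite !hc cE.
exists c; split=> // u.
have : #|u| <= #|u| by [].
elim: #|u| {-2}u => [|m IH] {}u.
  by rewrite leqn0 => /eqP/cards0_eq ->; rewrite imset0 sd0.
case: (set_0Vmem u) => [-> _|[j ju] hu]; first by rewrite imset0 sd0.
have hu' : #|u :\ j| <= m by move: hu; rewrite (cardsD1 j u) ju.
have ju' : j \notin u :\ j by rewrite !inE eqxx.
rewrite -(setD1K ju) (step #|u :\ j|) // IH // imsetU1 sdA; congr sd.
apply/setP=> x; rewrite in_sd in_setU1 in_set1; case: (eqVneq x (c j)) => [->|] /=; last by rewrite addbF.
by rewrite mem_imset // (negbTE ju').
Qed.
End Cube.


Section Count.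
Variable T : finType.
Variable Fam : {set {set T}}.

Definition isQ k (S : {set {set T}}) := (S \subset Fam) &&
  [exists f : {ffun {set 'I_k} -> {set T}},
     [&& injectiveb f, [set f u | u : {set 'I_k}] == S &
         [forall u, forall v, adj (f u) (f v) == adj u v]]].
Definition goodI (B C : {set T}) :=
  [disjoint B & C] && [forall W : {set T}, (W \subset C) ==> (B :|: W \in Fam)].
Definition Phi (p : {set T} * {set T}) : {set {set T}} := [set p.1 :|: W | W in powerset p.2].

Lemma sdU (B X Y : {set T}) : [disjoint B & X] -> [disjoint B & Y] -> sd (B :|: X) (B :|: Y) = sd X Y.
Proof.
move=> dX dY; apply/setP=> x; rewrite !in_sd !inE.
case xB: (x \in B) => //=.
by rewrite (disjointFr dX xB) (disjointFr dY xB).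
Qed.

Lemma sd_imset (U : finType) (e : U -> T) (u v : {set U}) : injective e ->
  sd (e @: u) (e @: v) = e @: sd u v.
Proof.
move=> ei; apply/setP=> x; rewrite in_sd.
case: (boolP (x \in e @: setT)) => [/imsetP [y _ ->]|xn].
  by rewrite !mem_imset // in_sd.
have h (w : {set U}) : x \in e @: w = false.
  apply/negbTE; apply: contra xn => /imsetP [y _ ->]; exact: imset_f.
by rewrite !h.
Qed.

Lemma count_cubes k : #|[set S | isQ k S]| =
  #|[set p : {set T} * {set T} | goodI p.1 p.2 && (#|p.2| == k)]|.
Proof.
rewrite -(card_in_imset (f := Phi)).
  apply: eq_card => S; rewrite inE; apply/idP/idP.
  - case/andP=> SF /existsP [f /and3P [/injectiveP finj /eqP fS /forallP fadj]].
    have fadj' u v : adj u v -> adj (f u) (f v) by move=> h; have := fadj u => /forallP/(_ v)/eqP ->.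
    have [c [cinj fE]] := cube_struct finj fadj'.
    pose C := c @: setT; pose B := f set0 :\: C.
    have Zsub (u : {set 'I_k}) : c @: u \subset C by apply: imsetS; apply: subsetT.
    have key : S = Phi (B, C).
      rewrite -fS; apply/setP=> X; apply/imsetP/imsetP.
      + case=> u _ ->; exists (C :&: f u); first by rewrite inE subsetIl.
        apply/setP=> x /=; rewrite !inE; case xC: (x \in C) => //=.
        have xu : x \in c @: u = false by apply/negbTE; apply: contraFN xC; exact: (subsetP (Zsub u)).
        by rewrite fE in_sd xu addbF orbF.
      + case=> W /=; rewrite inE => WC ->.
        pose Z := sd (C :&: f set0) W.
        have ZC : Z \subset C.
          apply/subsetP=> x; rewrite in_sd inE; case xC: (x \in C) => //=.
          by rewrite (negbTE (contraFN (subsetP WC x) xC)).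
        exists (c @^-1: Z) => //.
        have cZ : c @: (c @^-1: Z) = Z.
          apply/setP=> x; apply/imsetP/idP => [[y]|xZ]; first by rewrite inE => yZ ->.
          have := subsetP ZC x xZ; case/imsetP=> y _ xy; exists y => //; by rewrite inE -xy.
        rewrite fE cZ; apply/setP=> x; rewrite in_sd /Z in_sd !inE /=.
        case xC: (x \in C) => /=.
          by case: (x \in f set0); case: (x \in W).
        rewrite (negbTE (contraFN (subsetP WC x) xC)) addbF.
        by rewrite orbF.
    apply/imsetP; exists (B, C) => //.
    rewrite inE /=; apply/andP; split; last first.
      by rewrite card_imset // cardsT card_ord.
    apply/andP; split.
      by rewrite -setI_eq0; apply/eqP/setP=> x; rewrite !inE; case: (x \in C); rewrite ?andbF.
    apply/forallP=> W; apply/implyP=> WC; apply: (subsetP SF); rewrite key.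
    by apply/imsetP; exists W => //; rewrite inE.
  - case/imsetP=> [[B C]]; rewrite inE /= => /andP [/andP [dBC /forallP gW] /eqP Ck] ->.
    apply/andP; split.
      apply/subsetP=> X /imsetP [W]; rewrite inE => WC ->.
      by have := gW W; rewrite WC.
    subst k.
    pose e : 'I_#|C| -> T := enum_val.
    have einj : injective e by exact: enum_val_inj.
    have eC i : e i \in C by exact: enum_valP.
    have eS (u : {set 'I_#|C|}) : e @: u \subset C by apply/subsetP=> x /imsetP [i _ ->].
    have dS (u : {set 'I_#|C|}) : [disjoint B & e @: u].
      rewrite -setI_eq0; apply/eqP/setP=> x; rewrite !inE; case xB: (x \in B) => //=.
      by apply/negbTE; apply: contraFN (disjointFr dBC xB); exact: (subsetP (eS u) x).
    apply/existsP; exists [ffun u : {set 'I_#|C|} => B :|: e @: u]; apply/and3P; split.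
    - apply/injectiveP=> u v; rewrite !ffunE => E.
      apply: (imset_inj einj).
      apply/setP=> x; move/setP/(_ x): E; rewrite !inE; case xB: (x \in B) => //=.
      by rewrite !(disjointFr (dS _) xB).
    - apply/eqP/setP=> X; apply/imsetP/imsetP.
      + by case=> u _ ->; exists (e @: u); [rewrite inE; exact: eS | rewrite ffunE].
      + case=> W; rewrite inE /= => WC ->; exists (e @^-1: W) => //; rewrite ffunE.
        congr (B :|: _); apply/setP=> x; apply/idP/imsetP => [xW|[y]].
          have xC := subsetP WC x xW; exists (enum_rank_in xC x).
            by rewrite inE /e enum_rankK_in.
          by rewrite /e enum_rankK_in.
        by rewrite inE => yW ->.
    - apply/forallP=> u; apply/forallP=> v; rewrite !ffunE !adjE sdU // sd_imset // card_imset //.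
have sub (B C B' C' : {set T}) : [disjoint B & C] -> Phi (B,C) = Phi (B',C') ->
    (B' \subset B) /\ (C \subset C').
  move=> d E.
  have : B \in Phi (B', C') by rewrite -E; apply/imsetP; exists set0; rewrite ?inE ?sub0set ?setU0.
  case/imsetP=> W _ /= BW.
  have BB : B' \subset B by rewrite BW subsetUl.
  split=> //.
  have : B :|: C \in Phi (B', C') by rewrite -E; apply/imsetP; exists C; rewrite ?inE.
  case/imsetP=> W'; rewrite inE /= => W'C E'.
  apply/subsetP=> x xC; have : x \in B :|: C by rewrite inE xC orbT.
  rewrite E' inE; case/orP=> [xB'|]; last by move/(subsetP W'C).
  by have := disjointFr d (subsetP BB x xB'); rewrite xC.
move=> [B C] [B' C']; rewrite !inE /= => /andP [/andP [d1 _] _] /andP [/andP [d2 _] _] E.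
have [h1 h2] := sub _ _ _ _ d1 E; have [h3 h4] := sub _ _ _ _ d2 (esym E).
by congr pair; apply/eqP; rewrite eqEsubset ?h1 ?h2 ?h3 ?h4.
Qed.
End Count.


Definition down (p : nat) := (p == 0) || odd p.

Lemma nSS j : (j == j.+2) = false. Proof. by elim: j. Qed.

Lemma covE n (i j : 'I_n) :
  xi_cov i j = ((i == j.+1 :> nat) && down j) || ((j == i.+1 :> nat) && ~~ down i).
Proof.
case: i j => [i hi] [j hj]; rewrite /xi_cov /down /=.
case: (eqVneq j i.+1) => [E|nb].
  subst j.
  have -> : i.+1 <= n - 1 by rewrite leq_subRL ?addn1 //; apply: leq_ltn_trans hj.
  have -> : (i == i.+2) = false by elim: i {hi hj}.
  have -> : (i.+1 == i.+3) = false by elim: i {hi hj}.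
  case: i {hi hj} => [|[|[|i]]] //=.
  1-2: by rewrite ?negbK ?eqxx ?andbT ?andbF ?orbF.
case: (eqVneq i j.+1) => [E|na].
  subst i.
  have -> : j.+1 <= n - 1 by rewrite leq_subRL ?addn1 //; apply: leq_ltn_trans hi.
  case: j {hi hj nb} => [|[|[|j]]] //=.
  1-2: by rewrite ?eqSS ?nSS ?negbK ?eqxx ?andbT ?andbF ?orbF.
rewrite /= !eqSS.
apply/negbTE; rewrite !negb_or; apply/and4P; split.
- by apply/negP=> /andP [/eqP a /eqP b]; move: na; rewrite a b.
- by apply/negP=> /andP [/eqP a /eqP b]; move: na; rewrite a b.
- by rewrite !negb_and nb !orbT.
- by rewrite !negb_and na !orbT.
Qed.

Lemma cov_irr n (i : 'I_n) : xi_cov i i = false.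
Proof. by rewrite covE; have -> : ((i : nat) == i.+1) = false by elim: (i : nat). Qed.

Lemma filterE n (F : {set 'I_n}) :
  is_filter F = [forall i, forall j, xi_cov i j ==> (i \in F) ==> (j \in F)].
Proof.
apply/forallP/forallP=> H i; apply/forallP=> j; apply/implyP.
- move=> cij; apply/implyP=> iF; have := H i => /forallP/(_ j)/implyP; apply.
  by rewrite iF /xi_le connect1.
- case/andP=> iF /connectP [p pth ->]; elim: p i iF pth => //= a p IH i iF /andP [ia pth].
  apply: IH pth; have := H i => /forallP/(_ a)/implyP/(_ ia)/implyP; exact.
Qed.

Lemma goodE n (B C : {set 'I_n}) : goodI (filters n) B C =
  [disjoint B & C] && [forall i, forall j, xi_cov i j ==> ((i \in B) || (i \in C)) ==> (j \in B)].
Proof.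
rewrite /goodI; congr andb; apply/forallP/forallP.
- move=> H i; apply/forallP=> j; apply/implyP=> cij; apply/implyP; case/orP=> [iB|iC].
  + have := H set0; rewrite sub0set setU0 /filters inE filterE => /forallP/(_ i)/forallP/(_ j).
    by rewrite cij iB.
  + have := H [set i]; rewrite sub1set iC /filters inE filterE => /forallP/(_ i)/forallP/(_ j).
    rewrite cij !inE eqxx orbT /= => /orP [//|/eqP ji].
    by move: cij; rewrite ji cov_irr.
- move=> H W; apply/implyP=> WC; rewrite /filters inE filterE.
  apply/forallP=> i; apply/forallP=> j; apply/implyP=> cij; apply/implyP; rewrite !inE.
  move=> h; have := H i => /forallP/(_ j); rewrite cij /= => /implyP -> //.
  by case/orP: h => [->|/(subsetP WC) ->]; rewrite ?orbT.
Qed.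


Definition okp p (x y : nat) := if down p then (y != 0) ==> (x == 2) else (x != 0) ==> (y == 2).
Definition valid (s : seq nat) :=
  all (fun p => okp p (nth 0 s p) (nth 0 s p.+1)) (iota 0 (size s).-1).

Lemma ltn_pred_lt a m : a.+1 < m -> a < m.-1. Proof. by case: m. Qed.

Section Lab.
Variable n : nat.
Implicit Types B C : {set 'I_n}.
Definition lab (B C : {set 'I_n}) (i : 'I_n) : nat :=
  if i \in B then 2 else if i \in C then 1 else 0.
Definition labn (B C : {set 'I_n}) (p : nat) := if (insub p : option 'I_n) is Some i then lab B C i else 0.
Definition lseq (B C : {set 'I_n}) := mkseq (labn B C) n.

Lemma labn_val B C (i : 'I_n) : labn B C i = lab B C i.
Proof. by rewrite /labn valK. Qed.

Lemma nth_lseq B C (i : 'I_n) : nth 0 (lseq B C) i = lab B C i.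
Proof. by rewrite nth_mkseq ?labn_val. Qed.

Lemma size_lseq B C : size (lseq B C) = n.
Proof. by rewrite size_mkseq. Qed.

Lemma cond_valid B C :
  [forall i, forall j, xi_cov i j ==> ((i \in B) || (i \in C)) ==> (j \in B)] = valid (lseq B C).
Proof.
have labE1 i : (lab B C i != 0) = (i \in B) || (i \in C).
  by rewrite /lab; case: (i \in B); case: (i \in C).
have labE2 i : (lab B C i == 2) = (i \in B).
  by rewrite /lab; case: (i \in B); case: (i \in C).
apply/forallP/allP.
- move=> H p; rewrite mem_iota size_lseq add0n => hp.
  have hp1 : p.+1 < n by move: hp; case: (n).
  have hp0 : p < n by apply: ltnW.
  pose i := Ordinal hp0; pose j := Ordinal hp1.
  have -> : p = i by []; have -> : p.+1 = j by [].
  rewrite !nth_lseq /okp labE1 labE2 labE1 labE2.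
  case D: (down p).
  + have := H j => /forallP/(_ i); rewrite covE /= D eqxx /=; exact.
  + have := H i => /forallP/(_ j); rewrite covE /= D eqxx /= orbT; exact.
- move=> H i; apply/forallP=> j; apply/implyP; rewrite covE; case/orP=> /andP [/eqP E D].
  + have hj : (j : nat) \in iota 0 (size (lseq B C)).-1.
      by rewrite mem_iota size_lseq add0n; apply: ltn_pred_lt; rewrite -E.
    have := H _ hj; rewrite /okp D -E !nth_lseq -labE1 -labE2; exact.
  + have hi : (i : nat) \in iota 0 (size (lseq B C)).-1.
      by rewrite mem_iota size_lseq add0n; apply: ltn_pred_lt; rewrite -E.
    have := H _ hi; rewrite /okp (negbTE D) -E !nth_lseq -labE1 -labE2; exact.
Qed.

Lemma count_lseq B C : [disjoint B & C] -> count_mem 1 (lseq B C) = #|C|.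
Proof.
move=> d; rewrite /lseq /mkseq count_map -val_enum_ord count_map cardE size_filter.
rewrite enumT; apply: eq_count => i; rewrite /preim /= labn_val /lab.
case iB: (i \in B) => /=; last by case: (i \in C).
by rewrite (disjointFr d iB).
Qed.

Lemma lseq_inj B C B' C' : [disjoint B & C] -> [disjoint B' & C'] ->
  lseq B C = lseq B' C' -> B = B' /\ C = C'.
Proof.
move=> d d' E.
have h i : lab B C i = lab B' C' i by rewrite -!nth_lseq E.
split; apply/setP=> i; have := h i; rewrite /lab;
  case iB: (i \in B); case iB': (i \in B'); rewrite ?(disjointFr d iB) ?(disjointFr d' iB');
  by case: (i \in C); case: (i \in C').
Qed.

Lemma all_lseq B C : all (fun x => x < 3) (lseq B C).
Proof.
apply/allP=> x /mapP [p _ ->]; rewrite /labn; case: (insub p) => // i.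
by rewrite /lab; case: (i \in B); case: (i \in C).
Qed.

Lemma lseq_of (s : seq nat) : size s = n -> all (fun x => x < 3) s ->
  lseq [set i : 'I_n | nth 0 s i == 2] [set i : 'I_n | nth 0 s i == 1] = s.
Proof.
move=> hs ha; apply: (@eq_from_nth _ 0); first by rewrite size_lseq hs.
move=> p; rewrite size_lseq => hp.
have -> : p = Ordinal hp by [].
rewrite nth_lseq /lab !inE.
have : nth 0 s p < 3 by apply: (allP ha); rewrite mem_nth // hs.
by case: (nth 0 s p) => [|[|[|]]].
Qed.
End Lab.

Fixpoint all3 m : seq (seq nat) :=
  if m is m'.+1 then
    [seq rcons s 0 | s <- all3 m'] ++ [seq rcons s 1 | s <- all3 m'] ++ [seq rcons s 2 | s <- all3 m']
  else [:: [::]].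

Lemma mem_map_rcons (L : seq (seq nat)) t x y :
  (rcons t x \in [seq rcons s y | s <- L]) = (x == y) && (t \in L).
Proof.
apply/mapP/andP => [[s sL E]|[/eqP -> tL]]; last by exists t.
by case: (rcons_inj E) => -> ->.
Qed.

Lemma mem_all3 m s : (s \in all3 m) = (size s == m) && all (fun x => x < 3) s.
Proof.
elim: m s => [|m IH] s.
  by case: s.
case/lastP: s => [|t x].
  by rewrite /= !mem_cat; apply/negbTE; rewrite !negb_or; apply/and3P; split;
     apply/negP => /mapP [s _] /esym /eqP; rewrite -size_eq0 size_rcons.
rewrite /= !mem_cat !mem_map_rcons IH size_rcons eqSS all_rcons.
by case: x => [|[|[|x]]]; rewrite /= ?andbF ?andbT ?orbF // andbC.
Qed.

Lemma uniq_all3 m : uniq (all3 m).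
Proof.
elim: m => [|m IH] //=.
have U y : uniq [seq rcons s y | s <- all3 m] by rewrite map_inj_uniq //; exact: rcons_injl.
rewrite !cat_uniq !U /=; apply/and3P; split.
- apply/hasPn=> s; rewrite mem_cat; case/orP=> /mapP [t _ ->]; by rewrite mem_map_rcons.
- apply/hasPn=> s /mapP [t _ ->]; by rewrite mem_map_rcons.
- by [].
Qed.

Lemma count_pairs n k :
  #|[set p : {set 'I_n} * {set 'I_n} | goodI (filters n) p.1 p.2 && (#|p.2| == k)]| =
  count (fun s => valid s && (count_mem 1 s == k)) (all3 n).
Proof.
rewrite cardE -(size_map (fun p => lseq p.1 p.2)) -size_filter.
apply: perm_size; apply: uniq_perm.
- rewrite map_inj_in_uniq ?enum_uniq //.
  move=> [B C] [B' C']; rewrite !mem_enum !inE /= !goodE.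
  move=> /andP [/andP [d _] _] /andP [/andP [d' _] _] E.
  by have [-> ->] := lseq_inj d d' E.
- by rewrite filter_uniq // uniq_all3.
- move=> s; apply/mapP/idP.
  + case=> [[B C]]; rewrite mem_enum inE /= goodE => /andP [/andP [d cv] /eqP ck] ->.
    by rewrite mem_filter mem_all3 size_lseq eqxx all_lseq -cond_valid cv count_lseq // ck eqxx.
  + rewrite mem_filter mem_all3 => /andP [/andP [v /eqP ck] /andP [/eqP hs ha]].
    exists ([set i : 'I_n | nth 0 s i == 2], [set i : 'I_n | nth 0 s i == 1]); last by rewrite lseq_of.
    have d : [disjoint [set i : 'I_n | nth 0 s i == 2] & [set i : 'I_n | nth 0 s i == 1]].
      rewrite -setI_eq0; apply/eqP/setP=> i; rewrite !inE.
      by case: (nth 0 s i) => [|[|[|]]].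
    rewrite mem_enum inE /= goodE d cond_valid lseq_of // v /=.
    by rewrite -(count_lseq d) lseq_of // ck.
Qed.


Definition c m k := count (fun s => valid s && (count_mem 1 s == k)) (all3 m).
Definition cx m x k :=
  count (fun s => [&& valid s, last 0 s == x & count_mem 1 s == k]) (all3 m).

Lemma q_eq n k : q n k = c n k.
Proof. by rewrite /q /c -count_pairs -count_cubes. Qed.

Lemma c2 : [/\ c 2 0 = 3, c 2 1 = 2, c 2 2 = 0 & c 2 3 = 0]. Proof. by vm_compute. Qed.
Lemma c3 : [/\ c 3 0 = 4, c 3 1 = 3, c 3 2 = 0 & c 3 3 = 0]. Proof. by vm_compute. Qed.

Lemma count_split3 (T : eqType) (L : seq T) (P : pred T) (f : T -> nat) :
  (forall s, s \in L -> f s < 3) ->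
  count P L = count (fun s => P s && (f s == 0)) L + count (fun s => P s && (f s == 1)) L
            + count (fun s => P s && (f s == 2)) L.
Proof.
elim: L => //= a L IH H.
rewrite IH; last by move=> s sL; apply: H; rewrite inE sL orbT.
have : f a < 3 by apply: H; rewrite inE eqxx.
case: (f a) => [|[|[|]]] //= _; case: (P a) => /=; rewrite ?addnA ?add0n ?addn0 //; lia.
Qed.

Lemma last_lt3 m s : s \in all3 m -> last 0 s < 3.
Proof.
rewrite mem_all3 => /andP [_ /allP a]; case/lastP: s a => [//|t x] a.
by rewrite last_rcons; apply: a; rewrite mem_rcons inE eqxx.
Qed.

Lemma c_split m k : c m k = cx m 0 k + cx m 1 k + cx m 2 k.
Proof.
rewrite /c /cx (@count_split3 _ _ _ (fun s => last 0 s)); last by move=> s; exact: last_lt3.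
by congr (_ + _ + _); apply: eq_count => s; rewrite andbAC andbA.
Qed.

Lemma valid_rcons t y : 0 < size t ->
  valid (rcons t y) = valid t && okp (size t).-1 (last 0 t) y.
Proof.
move=> st; rewrite /valid size_rcons /= -{1}(prednK st) -addn1 iotaD all_cat /= andbT add0n.
congr andb.
  apply: eq_in_all => p; rewrite mem_iota add0n => hp.
  have h1 : p < size t by apply: (leq_trans hp); exact: leq_pred.
  have h2 : p.+1 < size t by rewrite -(prednK st) ltnS.
  by rewrite !nth_rcons h1 h2.
by rewrite !nth_rcons (prednK st) ltnn eqxx leqnn nth_last.
Qed.

Lemma count_rcons1 s x : count_mem 1 (rcons s x) = count_mem 1 s + (x == 1).
Proof. by rewrite -cats1 count_cat /= addn0 eq_sym. Qed.

Lemma cx_step m y k : 0 < m -> y < 3 ->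
  cx m.+1 y k = count (fun s => [&& valid s, okp m.-1 (last 0 s) y &
                                    count_mem 1 s + (y == 1) == k]) (all3 m).
Proof.
move=> m0 y3.
have gen x : count (fun s => [&& valid s, last 0 s == y & count_mem 1 s == k])
               [seq rcons s x | s <- all3 m] =
             if x == y then count (fun s => [&& valid s, okp m.-1 (last 0 s) y &
                                    count_mem 1 s + (y == 1) == k]) (all3 m) else 0.
  rewrite count_map; case: (eqVneq x y) => [<-|nxy].
    apply: eq_in_count => s; rewrite mem_all3 => /andP [/eqP ss _].
    by rewrite /preim /= last_rcons eqxx count_rcons1 valid_rcons ?ss // /= -andbA.
  rewrite -(count_pred0 (all3 m)); apply: eq_count => s.
  by rewrite /preim /= last_rcons (negbTE nxy) andbF.
rewrite /cx /= !count_cat !gen.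
by case: y y3 {gen} => [|[|[|]]] //= _; rewrite ?addn0 ?add0n.
Qed.

Lemma in_last m s : s \in all3 m -> last 0 s < 3.
Proof. exact: last_lt3. Qed.

Section Steps.
Variables (m : nat) (m0 : 0 < m).

Lemma up0 k : ~~ down m.-1 -> cx m.+1 0 k = cx m 0 k.
Proof.
move=> D; rewrite cx_step // /okp (negbTE D); apply: eq_count => s.
by case: (last 0 s) => [|x] /=; rewrite ?addn0 ?andbF.
Qed.
Lemma up1 k : ~~ down m.-1 -> cx m.+1 1 k.+1 = cx m 0 k.
Proof.
move=> D; rewrite cx_step // /okp (negbTE D); apply: eq_count => s.
by rewrite addn1 eqSS; case: (last 0 s) => [|x] /=; rewrite ?andbF.
Qed.
Lemma up2 k : ~~ down m.-1 -> cx m.+1 2 k = c m k.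
Proof.
move=> D; rewrite cx_step // /okp (negbTE D); apply: eq_count => s.
by rewrite addn0 implybT.
Qed.
Lemma dn0 k : down m.-1 -> cx m.+1 0 k = c m k.
Proof.
move=> D; rewrite cx_step // /okp D; apply: eq_count => s.
by rewrite addn0.
Qed.
Lemma dn1 k : down m.-1 -> cx m.+1 1 k.+1 = cx m 2 k.
Proof.
move=> D; rewrite cx_step // /okp D; apply: eq_count => s.
by rewrite addn1 eqSS.
Qed.
Lemma dn2 k : down m.-1 -> cx m.+1 2 k = cx m 2 k.
Proof.
move=> D; rewrite cx_step // /okp D; apply: eq_count => s.
by rewrite addn0.
Qed.
Lemma x1_0 : cx m.+1 1 0 = 0.
Proof.
rewrite cx_step //; apply/eqP; rewrite eqn0Ngt -has_count; apply/hasPn => s _.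
by rewrite eqxx addn1 !andbF.
Qed.
End Steps.

Lemma crec m k : c m.+4 k = c m.+3 k + c m.+2 k + (if k is k'.+1 then c m.+2 k' else 0).
Proof.
rewrite c_split.
case D: (down m.+2).
- have D' : ~~ down m.+1 by move: D; rewrite /down /= !negbK => ->.
  rewrite dn0 // dn2 // up2 //.
  case: k => [|k]; first by rewrite x1_0 //; lia.
  by rewrite dn1 // up2 //; lia.
- have D' : down m.+1 by move: D; rewrite /down /= !negbK => ->.
  rewrite up0 ?D // up2 ?D // dn0 //.
  case: k => [|k]; first by rewrite x1_0 //; lia.
  by rewrite up1 ?D // dn0 //; lia.
Qed.

Import GRing.Theory Num.Theory.

Lemma fibSS m : fib m.+2 = fib m.+1 + fib m. Proof. by []. Qed.
Lemma lucasSS m : lucas m.+2 = lucas m.+1 + lucas m. Proof. by []. Qed.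
Lemma lucasF m : lucas m.+1 = fib m + fib m.+2.
Proof.
have : lucas m.+1 = fib m + fib m.+2 /\ lucas m.+2 = fib m.+1 + fib m.+3.
  elim: m => [|m [IH1 IH2]]; first by [].
  split=> //; rewrite lucasSS IH1 IH2 !fibSS; lia.
by case.
Qed.

Lemma part1 n : 2 <= n -> c n 0 = lucas n /\ c n 1 = n * fib n.-1.
Proof.
have H : forall m, (c m.+2 0 = lucas m.+2 /\ c m.+2 1 = m.+2 * fib m.+1) /\
                   (c m.+3 0 = lucas m.+3 /\ c m.+3 1 = m.+3 * fib m.+2).
  elim=> [|m [[A0 A1] [B0 B1]]].
    have [a0 a1 _ _] := c2; have [b0 b1 _ _] := c3.
    by rewrite a0 a1 b0 b1.
  split; first by split.
  rewrite !crec A0 A1 B0 B1; split; first by rewrite addn0.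
  rewrite (lucasF m.+1) !fibSS; nia.
case: n => [|[|m]] // _; by case: (H m).
Qed.

Lemma cbase : (c 4 1 = 8 /\ c 4 2 = 2) /\ (c 5 2 = 5 /\ c 6 2 = 15) /\ (c 6 3 = 2 /\ c 7 3 = 7).
Proof.
have [a0 a1 a2 a3] := c2; have [b0 b1 b2 b3] := c3.
have c41 : c 4 1 = 8 by rewrite (crec 0 1) b1 a1 a0.
have c42 : c 4 2 = 2 by rewrite (crec 0 2) b2 a2 a1.
have c43 : c 4 3 = 0 by rewrite (crec 0 3) b3 a3 a2.
have c52 : c 5 2 = 5 by rewrite (crec 1 2) c42 b2 b1.
have c53 : c 5 3 = 0 by rewrite (crec 1 3) c43 b3 b2.
have c62 : c 6 2 = 15 by rewrite (crec 2 2) c52 c42 c41.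
have c63 : c 6 3 = 2 by rewrite (crec 2 3) c53 c43 c42.
have c73 : c 7 3 = 7 by rewrite (crec 3 3) c63 c53 c52.
by [].
Qed.

Local Open Scope ring_scope.

Definition R2 (n : nat) : rat :=
  1 / 5 * n%:R * (fib (n - 3))%:R + 1 / 10 * (n%:R - 3) * n%:R * (lucas (n - 2))%:R.

Lemma part2 n : (4 <= n)%N -> (c n 2)%:R = R2 n.
Proof.
have H : forall m, (c m.+4 2)%:R = R2 m.+4 /\ (c m.+4.+1 2)%:R = R2 m.+4.+1.
  elim=> [|m [A B]].
    have [[_ c42] [[c52 _] _]] := cbase.
    have e1 : (4 - 3 = 1)%N by []. have e2 : (4 - 2 = 2)%N by [].
    have e3 : (5 - 3 = 2)%N by []. have e4 : (5 - 2 = 3)%N by [].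
    rewrite /R2 c42 c52 e1 e2 e3 e4 /=.
    by split; field.
  split=> //; rewrite crec natrD natrD A B.
  have [_ ->] := @part1 m.+4 isT.
  rewrite /R2.
  have -> : (m.+4.+2 - 3 = m.+3)%N by lia.
  have -> : (m.+4.+2 - 2 = m.+4)%N by lia.
  have -> : (m.+4.+1 - 3 = m.+2)%N by lia.
  have -> : (m.+4.+1 - 2 = m.+3)%N by lia.
  have -> : (m.+4 - 3 = m.+1)%N by lia.
  have -> : (m.+4 - 2 = m.+2)%N by lia.
  rewrite !lucasF !fibSS /=.
  rewrite !natrD !natrM.
  by field.
case: n => [|[|[|[|m]]]] // _; by case: (H m).
Qed.

Definition R3 (n : nat) : rat :=
  2 / 25 * n%:R * (fib (n - 5))%:R
  + 1 / 25 * (n%:R - 5) * n%:R * (lucas (n - 4))%:R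
  + 1 / 30 * (n%:R ^+ 2 - 9 * n%:R + 20) * n%:R * (fib (n - 3))%:R.

Lemma part3 n : (6 <= n)%N -> (c n 3)%:R = R3 n.
Proof.
have H : forall m, (c m.+4.+2 3)%:R = R3 m.+4.+2 /\ (c m.+4.+3 3)%:R = R3 m.+4.+3.
  elim=> [|m [A B]].
    have [_ [_ [c63 c73]]] := cbase.
    have e1 : (6 - 5 = 1)%N by []. have e2 : (6 - 4 = 2)%N by [].
    have e3 : (6 - 3 = 3)%N by []. have e4 : (7 - 5 = 2)%N by [].
    have e5 : (7 - 4 = 3)%N by []. have e6 : (7 - 3 = 4)%N by [].
    rewrite /R3 c63 c73 e1 e2 e3 e4 e5 e6 /=.
    by split; field.
  split=> //; rewrite crec natrD natrD A B.
  rewrite (@part2 m.+4.+2 isT).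
  rewrite /R3 /R2.
  have -> : (m.+4.+4 - 5 = m.+3)%N by lia.
  have -> : (m.+4.+4 - 4 = m.+4)%N by lia.
  have -> : (m.+4.+4 - 3 = m.+4.+1)%N by lia.
  have -> : (m.+4.+3 - 5 = m.+2)%N by lia.
  have -> : (m.+4.+3 - 4 = m.+3)%N by lia.
  have -> : (m.+4.+3 - 3 = m.+4)%N by lia.
  have -> : (m.+4.+2 - 5 = m.+1)%N by lia.
  have -> : (m.+4.+2 - 4 = m.+2)%N by lia.
  have -> : (m.+4.+2 - 3 = m.+3)%N by lia.
  have -> : (m.+4.+2 - 2 = m.+4)%N by lia.
  rewrite !lucasF !fibSS /=.
  rewrite !natrD ?natrM.
  by field.
case: n => [|[|[|[|[|[|m]]]]]] // _; by case: (H m).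
Qed.


Theorem mainTheorem7 :
  (forall n : nat, (2 <= n)%N ->
      q n 0 = lucas n /\ q n 1 = (n * fib n.-1)%N) /\
  (forall n : nat, (4 <= n)%N ->
      (q n 2)%:R = 1 / 5 * n%:R * (fib (n - 3))%:R
                   + 1 / 10 * (n%:R - 3) * n%:R * (lucas (n - 2))%:R :> rat) /\
  (forall n : nat, (6 <= n)%N ->
      (q n 3)%:R = 2 / 25 * n%:R * (fib (n - 5))%:R
                   + 1 / 25 * (n%:R - 5) * n%:R * (lucas (n - 4))%:R
                   + 1 / 30 * (n%:R ^+ 2 - 9 * n%:R + 20) * n%:R * (fib (n - 3))%:R
                   :> rat).
Proof.
split; [|split].
- by move=> n hn; rewrite !q_eq; exact: part1.
- by move=> n hn; rewrite q_eq; exact: part2.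
- by move=> n hn; rewrite q_eq; exact: part3.
Qed.
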